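(* Let $\Phi(f)(x,y)=1-f(1-x,1-y)$. If $\otimes$ is a uninorm satisfying properties $A$ and $B$, then the rearrangement inequality and the dual rearrangement inequality hold for $(\otimes,\Phi(\otimes))$. If $\oplus$ is a uninorm satisfying properties $A'$ and $B'$, then the rearrangement inequality and the dual rearrangement inequality hold for $(\Phi(\oplus),\oplus)$.
   Context: A uninorm is a function $\otimes:[0,1]^2\to[0,1]$ that is commutative, associative, monotonic ($x\leq y$ implies $x\otimes z\leq y\otimes z$), and has an identity element $e\in[0,1]$ (note $\Phi$ of a uninorm is again a uninorm). Properties of $f:[0,1]^2\to[0,1]$: $A$: for all $0\leq x\leq y\leq z\leq w\leq 1$, $w+x\leq y+z\Rightarrow f(x,w)\leq f(y,z)$; $A'$: for all $0\leq x\leq y\leq z\leq w\leq 1$, $w+x\geq y+z\Rightarrow f(x,w)\geq f(y,z)$; $B$: for all $0\leq x\leq y\leq 1$, $0\leq z\leq w\leq1$, $f(x,w)-f(x,z)\leq f(y,w)-f(y,z)$; $B'$: same with $\geq$. For uninorms, $(\otimes,\oplus)$ satisfies the rearrangement inequality if for every $n\geq1$, all $0\leq x_1\leq\cdots\leq x_n\leq 1$, $0\leq y_1\leq\cdots\leq y_n\leq 1$ and every permutation $\sigma$ of $\{1,\dots,n\}$, $$(x_n\otimes y_1)\oplus\cdots\oplus(x_1\otimes y_n)\leq (x_{\sigma(1)}\otimes y_1)\oplus\cdots\oplus(x_{\sigma(n)}\otimes y_n)\leq (x_1\otimes y_1)\oplus\cdots\oplus(x_n\otimes y_n),$$ and the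 dual rearrangement inequality if for all such data $$(x_n\oplus y_1)\otimes\cdots\otimes(x_1\oplus y_n)\geq (x_{\sigma(1)}\oplus y_1)\otimes\cdots\otimes(x_{\sigma(n)}\oplus y_n)\geq (x_1\oplus y_1)\otimes\cdots\otimes(x_n\oplus y_n).$$ *)

(* Defs.v *)
From Stdlib Require Import Reals Lra.
Open Scope R_scope.

Definition in01 (x : R) : Prop := 0 <= x <= 1.

Definition is_uninorm (u : R -> R -> R) : Prop :=
  (forall x y, in01 x -> in01 y -> in01 (u x y)) /\
  (forall x y, in01 x -> in01 y -> u x y = u y x) /\
  (forall x y z, in01 x -> in01 y -> in01 z -> u (u x y) z = u x (u y z)) /\
  (forall x y z, in01 x -> in01 y -> in01 z -> x <= y -> u x z <= u y z) /\
  (exists e, in01 e /\ forall x, in01 x -> u x e = x).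

Definition Phi (f : R -> R -> R) : R -> R -> R :=
  fun x y => 1 - f (1 - x) (1 - y).

Definition propA (f : R -> R -> R) : Prop :=
  forall x y z w, 0 <= x -> x <= y -> y <= z -> z <= w -> w <= 1 ->
    w + x <= y + z -> f x w <= f y z.

Definition propA' (f : R -> R -> R) : Prop :=
  forall x y z w, 0 <= x -> x <= y -> y <= z -> z <= w -> w <= 1 ->
    w + x >= y + z -> f x w >= f y z.

Definition propB (f : R -> R -> R) : Prop :=
  forall x y z w, 0 <= x -> x <= y -> y <= 1 -> 0 <= z -> z <= w -> w <= 1 ->
    f x w - f x z <= f y w - f y z.

Definition propB' (f : R -> R -> R) : Prop :=
  forall x y z w, 0 <= x -> x <= y -> y <= 1 -> 0 <= z -> z <= w -> w <= 1 ->
    f x w - f x z >= f y w - f y z.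

(* foldop op a k = (...((a 0 op a 1) op a 2) ... op a k): combines k+1 terms. *)
Fixpoint foldop (op : R -> R -> R) (a : nat -> R) (k : nat) : R :=
  match k with
  | O => a O
  | S k' => op (foldop op a k') (a (S k'))
  end.

Definition is_perm (n : nat) (sigma : nat -> nat) : Prop :=
  (forall i, (i < n)%nat -> (sigma i < n)%nat) /\
  (forall i j, (i < n)%nat -> (j < n)%nat -> sigma i = sigma j -> i = j).

(* Data: 0 <= x_0 <= ... <= x_{n-1} <= 1 (0-indexed version of x_1..x_n). *)
Definition sorted01 (n : nat) (x : nat -> R) : Prop :=
  (forall i, (i < n)%nat -> in01 (x i)) /\
  (forall i j, (i <= j)%nat -> (j < n)%nat -> x i <= x j).

Definition rearrangement (otimes oplus : R -> R -> R) : Prop :=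
  forall (n : nat) (x y : nat -> R) (sigma : nat -> nat),
    (1 <= n)%nat -> sorted01 n x -> sorted01 n y -> is_perm n sigma ->
    foldop oplus (fun i => otimes (x (n - 1 - i)%nat) (y i)) (n - 1)
      <= foldop oplus (fun i => otimes (x (sigma i)) (y i)) (n - 1) /\
    foldop oplus (fun i => otimes (x (sigma i)) (y i)) (n - 1)
      <= foldop oplus (fun i => otimes (x i) (y i)) (n - 1).

Definition dual_rearrangement (otimes oplus : R -> R -> R) : Prop :=
  forall (n : nat) (x y : nat -> R) (sigma : nat -> nat),
    (1 <= n)%nat -> sorted01 n x -> sorted01 n y -> is_perm n sigma ->
    foldop otimes (fun i => oplus (x (n - 1 - i)%nat) (y i)) (n - 1)
      >= foldop otimes (fun i => oplus (x (sigma i)) (y i)) (n - 1) /\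
    foldop otimes (fun i => oplus (x (sigma i)) (y i)) (n - 1)
      >= foldop otimes (fun i => oplus (x i) (y i)) (n - 1).

(* Main.v *)
Require Import Defs.
From Stdlib Require Import Reals Lra Lia Arith FunctionalExtensionality.
Open Scope R_scope.

Definition GOOD (le : R -> R -> Prop) (op : R -> R -> R) : Prop :=
  (forall a, le a a) /\ (forall a b c, le a b -> le b c -> le a c) /\
  (forall a b, op a b = op b a) /\ (forall a b c, op (op a b) c = op a (op b c)) /\
  (forall a b c, le a b -> le (op a c) (op b c)).

Lemma fold_ext op t t' p : (forall i, (i <= p)%nat -> t i = t' i) ->
  foldop op t p = foldop op t' p.
Proof.
  induction p; intros H; simpl.
  - apply H; lia.
  - rewrite IHp by (intros; apply H; lia). rewrite (H (S p)) by lia. reflexivity.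
Qed.

Lemma fold_mono le op t t' p : GOOD le op ->
  (forall i, (i <= p)%nat -> le (t i) (t' i)) -> le (foldop op t p) (foldop op t' p).
Proof.
  intros [Hr [Ht [Hc [Ha Hm]]]]. induction p; intros H; simpl.
  - apply H; lia.
  - apply Ht with (op (foldop op t' p) (t (S p))).
    + apply Hm, IHp; intros; apply H; lia.
    + rewrite (Hc _ (t (S p))), (Hc _ (t' (S p))). apply Hm, H; lia.
Qed.

Definition upd (t : nat -> R) k v := fun i => if Nat.eqb i k then v else t i.

Lemma fold_E3 le op t k p c : GOOD le op -> (k <= p)%nat ->
  op (foldop op t p) c = foldop op (upd t k (op (t k) c)) p.
Proof.
  intros [Hr [Ht [Hc [Ha Hm]]]]. induction p; intros Hk.
  - assert (k = 0%nat) by lia; subst. simpl. reflexivity.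
  - destruct (Nat.eq_dec k (S p)) as [->|Hne].
    + simpl. replace (upd t (S p) (op (t (S p)) c) (S p)) with (op (t (S p)) c)
        by (unfold upd; rewrite Nat.eqb_refl; reflexivity). rewrite Ha.
      f_equal. apply fold_ext. intros i Hi. unfold upd.
      destruct (Nat.eqb_spec i (S p)); [lia|reflexivity].
    + simpl. rewrite <- IHp by lia.
      replace (upd t k (op (t k) c) (S p)) with (t (S p))
        by (unfold upd; destruct (Nat.eqb_spec (S p) k); [lia|reflexivity]).
      rewrite !Ha. f_equal. apply Hc.
Qed.

Lemma swap_last le op t t' k p : GOOD le op -> (k <= p)%nat ->
  (forall i, (i <= p)%nat -> i <> k -> t i = t' i) ->
  le (op (t k) (t (S p))) (op (t' k) (t' (S p))) ->
  le (foldop op t (S p)) (foldop op t' (S p)).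
Proof.
  intros G Hk He Hl. simpl.
  rewrite (fold_E3 le op t k p) by assumption.
  rewrite (fold_E3 le op t' k p) by assumption.
  apply fold_mono; auto. intros i Hi. unfold upd.
  destruct G as [Hr _].
  destruct (Nat.eqb_spec i k). assumption. rewrite He by auto. apply Hr.
Qed.

Definition skip (j i : nat) : nat := if Nat.ltb i j then i else S i.
Definition unskip (j v : nat) : nat := if Nat.ltb v j then v else (v - 1)%nat.

Definition SW (le : R -> R -> Prop) (op : R -> R -> R) (h : R -> R -> R) (y x : nat -> R) (m : nat) : Prop :=
  forall i j k l, (i <= j)%nat -> (j <= m)%nat -> (k <= l)%nat -> (l <= m)%nat ->
    le (op (h (x i) (y l)) (h (x j) (y k))) (op (h (x i) (y k)) (h (x j) (y l))).

Lemma chain le op h y x p : GOOD le op -> SW le op h y x (S p) ->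
  forall d j, (j + d = S p)%nat ->
  le (foldop op (fun i => if Nat.ltb i (S p) then h (x (skip j i)) (y i) else h (x j) (y i)) (S p))
     (foldop op (fun i => h (x i) (y i)) (S p)).
Proof.
  intros G HS. induction d; intros j Hj.
  - assert (j = S p) by lia; subst. rewrite (fold_ext _ _ (fun i => h (x i) (y i))).
    + destruct G as [Hr _]; apply Hr.
    + intros i Hi. unfold skip. destruct (Nat.ltb_spec i (S p)); [|assert (i = S p) by lia; subst; reflexivity].
      destruct (Nat.ltb_spec i (S p)); [reflexivity|lia].
  - assert (Hj1: (S j + d = S p)%nat) by lia. specialize (IHd _ Hj1).
    pose proof G as G'. destruct G' as [Hr [Ht [Hc [Ha Hm]]]].
    eapply Ht; [|exact IHd].
    apply swap_last with (k := j); auto; [lia| |].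
    + intros i Hi Hne. destruct (Nat.ltb_spec i (S p)); [|lia].
      unfold skip. destruct (Nat.ltb_spec i j); destruct (Nat.ltb_spec i (S j)); try reflexivity; lia.
    + simpl. destruct (Nat.ltb_spec j (S p)); [|lia].
      destruct (Nat.ltb_spec (S p) (S p)); [lia|].
      unfold skip. destruct (Nat.ltb_spec j j); [lia|].
      destruct (Nat.ltb_spec j (S j)); [|lia].
      rewrite Hc. apply HS; lia.
Qed.

Lemma upper le op h y : forall m x sigma, GOOD le op -> SW le op h y x m -> is_perm (S m) sigma ->
  le (foldop op (fun i => h (x (sigma i)) (y i)) m) (foldop op (fun i => h (x i) (y i)) m).
Proof.
  induction m; intros x sigma G HS [Hb Hi].
  - simpl. assert (sigma 0%nat = 0%nat) by (specialize (Hb 0%nat); lia).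
    rewrite H. destruct G as [Hr _]; apply Hr.
  - pose proof G as G'. destruct G' as [Hr [Ht [Hc [Ha Hm]]]].
    set (j := sigma (S m)).
    assert (Hjm : (j <= S m)%nat) by (unfold j; specialize (Hb (S m)); lia).
    assert (Hne : forall i, (i <= m)%nat -> sigma i <> j).
    { intros i Hil E. unfold j in E. apply Hi in E; lia. }
    set (x2 := fun i => x (skip j i)).
    set (s2 := fun i => unskip j (sigma i)).
    assert (IH := IHm x2 s2 G).
    assert (HS2 : SW le op h y x2 m).
    { intros i1 j1 k1 l1 H1 H2 H3 H4. unfold x2. apply HS; unfold skip;
      destruct (Nat.ltb_spec i1 j); destruct (Nat.ltb_spec j1 j); lia. }
    assert (HP2 : is_perm (S m) s2).
    { split.
      - intros i Hil. unfold s2, unskip. pose proof (Hne i ltac:(lia)). pose proof (Hb i ltac:(lia)).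
        destruct (Nat.ltb_spec (sigma i) j); lia.
      - intros i1 i2 H1 H2 E. unfold s2, unskip in E.
        pose proof (Hne i1 ltac:(lia)). pose proof (Hne i2 ltac:(lia)).
        apply Hi; try lia.
        destruct (Nat.ltb_spec (sigma i1) j); destruct (Nat.ltb_spec (sigma i2) j); lia. }
    specialize (IH HS2 HP2).
    eapply Ht; [|apply (chain le op h y x m G HS (S m - j) j); lia].
    simpl. eapply Ht.
    + apply Hm with (b := foldop op (fun i => h (x2 i) (y i)) m).
      rewrite (fold_ext _ _ (fun i => h (x2 (s2 i)) (y i))); [exact IH|].
      intros i Hil. unfold x2, s2, skip, unskip. pose proof (Hne i Hil).
      destruct (Nat.ltb_spec (sigma i) j).
      * destruct (Nat.ltb_spec (sigma i) j); [reflexivity|lia].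
      * destruct (Nat.ltb_spec (sigma i - 1) j); [lia|]. f_equal. f_equal. lia.
    + unfold j, x2. rewrite (fold_ext _ (fun i => if Nat.ltb i (S m) then _ else _) (fun i => h (x (skip (sigma (S m)) i)) (y i))); [rewrite Nat.ltb_irrefl; apply Hr|].
      intros i Hil. destruct (Nat.ltb_spec i (S m)); [reflexivity|lia].
Qed.

Lemma generic le op h y m x sigma : GOOD le op -> SW le op h y x m -> is_perm (S m) sigma ->
  le (foldop op (fun i => h (x (m - i)%nat) (y i)) m) (foldop op (fun i => h (x (sigma i)) (y i)) m) /\
  le (foldop op (fun i => h (x (sigma i)) (y i)) m) (foldop op (fun i => h (x i) (y i)) m).
Proof.
  intros G HS HP. split; [|apply (upper le op h y m x sigma); auto].
  destruct G as [Hr [Ht [Hc [Ha Hm]]]].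
  set (le' := fun a b => le b a).
  assert (G' : GOOD le' op) by (repeat split; unfold le'; eauto).
  set (x' := fun i => x (m - i)%nat).
  assert (HS' : SW le' op h y x' m).
  { intros i j k l H1 H2 H3 H4. unfold le', x'.
    rewrite (Hc (h (x (m - i)%nat) (y k))), (Hc (h (x (m - i)%nat) (y l))).
    apply HS; lia. }
  destruct HP as [Hb Hi].
  assert (HP' : is_perm (S m) (fun i => (m - sigma i)%nat)).
  { split. intros; lia. intros i j H1 H2 E. apply Hi; auto.
    pose proof (Hb i H1); pose proof (Hb j H2); lia. }
  pose proof (upper le' op h y m x' _ G' HS' HP') as U. unfold le' in U.
  unfold x' in U.
  rewrite (fold_ext _ (fun i => h (x (m - (m - sigma i))%nat) (y i)) (fun i => h (x (sigma i)) (y i))) in U.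
  exact U. intros i Hil. pose proof (Hb i ltac:(lia)). do 3 f_equal. lia.
Qed.

Definition clamp (a : R) : R := Rmax 0 (Rmin 1 a).
Lemma clamp_in a : in01 (clamp a).
Proof. unfold clamp, in01, Rmax, Rmin. repeat destruct Rle_dec; lra. Qed.
Lemma clamp_id a : in01 a -> clamp a = a.
Proof. unfold clamp, in01, Rmax, Rmin. intros. repeat destruct Rle_dec; lra. Qed.
Lemma clamp_mono a b : a <= b -> clamp a <= clamp b.
Proof. unfold clamp, Rmax, Rmin. intros. repeat destruct Rle_dec; lra. Qed.

Definition opc (u : R -> R -> R) a b := u (clamp a) (clamp b).

Lemma mono2 u : is_uninorm u -> forall x y z, in01 x -> in01 y -> in01 z -> y <= z -> u x y <= u x z.
Proof.
  intros [Hcl [Hc [Ha [Hm Hid]]]] x y z Hx Hy Hz H.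
  rewrite (Hc x y), (Hc x z) by auto. apply Hm; auto.
Qed.

Lemma opc_comm u : is_uninorm u -> forall a b, opc u a b = opc u b a.
Proof. intros [Hcl [Hc _]] a b. unfold opc. apply Hc; apply clamp_in. Qed.
Lemma opc_assoc u : is_uninorm u -> forall a b c, opc u (opc u a b) c = opc u a (opc u b c).
Proof.
  intros [Hcl [Hc [Ha _]]] a b c. unfold opc.
  rewrite (clamp_id (u (clamp a) (clamp b))) by (apply Hcl; apply clamp_in).
  rewrite (clamp_id (u (clamp b) (clamp c))) by (apply Hcl; apply clamp_in).
  apply Ha; apply clamp_in.
Qed.
Lemma opc_mono u : is_uninorm u -> forall a b c, a <= b -> opc u a c <= opc u b c.
Proof.
  intros [Hcl [Hc [Ha [Hm _]]]] a b c H. unfold opc. apply Hm; try apply clamp_in.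
  apply clamp_mono; auto.
Qed.

Lemma GOOD_le u : is_uninorm u -> GOOD Rle (opc u).
Proof.
  intros U. repeat split.
  - intros; lra.
  - intros; lra.
  - apply opc_comm; auto.
  - apply opc_assoc; auto.
  - intros; apply opc_mono; auto.
Qed.
Lemma GOOD_ge u : is_uninorm u -> GOOD Rge (opc u).
Proof.
  intros U. repeat split.
  - intros; lra.
  - intros; lra.
  - apply opc_comm; auto.
  - apply opc_assoc; auto.
  - intros; apply Rle_ge, opc_mono; auto; lra.
Qed.

Lemma fold_opc u t p : is_uninorm u -> (forall i, (i <= p)%nat -> in01 (t i)) ->
  foldop (opc u) t p = foldop u t p /\ in01 (foldop u t p).
Proof.
  intros U. pose proof U as [Hcl _]. induction p; intros H; simpl.
  - split; [reflexivity|apply H; lia].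
  - destruct IHp as [E I]; [intros; apply H; lia|].
    assert (Ht : in01 (t (S p))) by (apply H; lia).
    rewrite E. unfold opc. rewrite (clamp_id _ I), (clamp_id _ Ht). split; auto.
Qed.

Lemma Phi_uninorm u : is_uninorm u -> is_uninorm (Phi u).
Proof.
  intros [Hcl [Hc [Ha [Hm [e [He Hid]]]]]]. unfold Phi.
  assert (N : forall x, in01 x -> in01 (1 - x)) by (unfold in01; intros; lra).
  repeat split.
  - pose proof (Hcl (1 - x) (1 - y) (N _ H) (N _ H0)) as K. unfold in01 in *; lra.
  - pose proof (Hcl (1 - x) (1 - y) (N _ H) (N _ H0)) as K. unfold in01 in *; lra.
  - intros. rewrite Hc; auto.
  - intros x y z Hx Hy Hz. replace (1 - (1 - u (1 - x) (1 - y))) with (u (1 - x) (1 - y)) by ring.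
    replace (1 - (1 - u (1 - y) (1 - z))) with (u (1 - y) (1 - z)) by ring.
    rewrite Ha; auto.
  - intros x y z Hx Hy Hz H. assert (u (1 - y) (1 - z) <= u (1 - x) (1 - z)).
    { apply Hm; auto. lra. } lra.
  - exists (1 - e). split; auto. intros x Hx.
    replace (1 - (1 - e)) with e by ring. rewrite Hid; auto. ring.
Qed.

Lemma CoreR u : is_uninorm u -> propA u -> propB u -> forall p q r s,
  in01 p -> in01 q -> in01 r -> in01 s -> p <= q -> r <= s ->
  Phi u (u p s) (u q r) <= Phi u (u p r) (u q s).
Proof.
  intros U hA hB p q r s Hp Hq Hr Hs Hpq Hrs.
  pose proof U as [Hcl [Hc [Ha [Hm _]]]].
  pose proof (mono2 u U) as M2.
  assert (Ia := Hcl p s Hp Hs). assert (Ib := Hcl q r Hq Hr).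
  assert (Ic := Hcl p r Hp Hr). assert (Id := Hcl q s Hq Hs).
  assert (ca : u p r <= u p s) by (apply M2; auto).
  assert (cb : u p r <= u q r) by (apply Hm; auto).
  assert (ad : u p s <= u q s) by (apply Hm; auto).
  assert (bd : u q r <= u q s) by (apply M2; auto).
  assert (B := hB p q r s ltac:(unfold in01 in *; lra) Hpq ltac:(unfold in01 in *; lra)
                 ltac:(unfold in01 in *; lra) Hrs ltac:(unfold in01 in *; lra)).
  unfold Phi. set (a := u p s) in *. set (b := u q r) in *. set (c := u p r) in *. set (d := u q s) in *.
  unfold in01 in *.
  rewrite (Hc (1 - c) (1 - d)) by (unfold in01; lra).
  destruct (Rle_dec a b).
  - assert (K := hA (1 - d) (1 - b) (1 - a) (1 - c) ltac:(lra) ltac:(lra) ltac:(lra) ltac:(lra) ltac:(lra) ltac:(lra)).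
    rewrite (Hc (1 - b) (1 - a)) in K by (unfold in01; lra). lra.
  - assert (K := hA (1 - d) (1 - a) (1 - b) (1 - c) ltac:(lra) ltac:(lra) ltac:(lra) ltac:(lra) ltac:(lra) ltac:(lra)).
    lra.
Qed.

Lemma CoreD u : is_uninorm u -> propA u -> propB u -> forall p q r s,
  in01 p -> in01 q -> in01 r -> in01 s -> p <= q -> r <= s ->
  u (Phi u p s) (Phi u q r) >= u (Phi u p r) (Phi u q s).
Proof.
  intros U hA hB p q r s Hp Hq Hr Hs Hpq Hrs.
  pose proof U as [Hcl [Hc [Ha [Hm _]]]].
  pose proof (mono2 u U) as M2.
  assert (N : forall x, in01 x -> in01 (1 - x)) by (unfold in01; intros; lra).
  unfold Phi.
  set (P1 := 1 - q) in *. set (P2 := 1 - p) in *. set (Q1 := 1 - s) in *. set (Q2 := 1 - r) in *.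
  assert (I1 : in01 P1) by (apply N; auto). assert (I2 : in01 P2) by (apply N; auto).
  assert (J1 : in01 Q1) by (apply N; auto). assert (J2 : in01 Q2) by (apply N; auto).
  assert (L1 : P1 <= P2) by (unfold P1, P2; lra). assert (L2 : Q1 <= Q2) by (unfold Q1, Q2; lra).
  assert (K1 := Hcl P1 Q1 I1 J1). assert (K2 := Hcl P1 Q2 I1 J2).
  assert (K3 := Hcl P2 Q1 I2 J1). assert (K4 := Hcl P2 Q2 I2 J2).
  assert (e1 : u P2 Q1 <= u P2 Q2) by (apply M2; auto).
  assert (e2 : u P1 Q2 <= u P2 Q2) by (apply Hm; auto).
  assert (e3 : u P1 Q1 <= u P2 Q1) by (apply Hm; auto).
  assert (e4 : u P1 Q1 <= u P1 Q2) by (apply M2; auto).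
  assert (B := hB P1 P2 Q1 Q2 ltac:(unfold in01 in *; lra) L1 ltac:(unfold in01 in *; lra)
                 ltac:(unfold in01 in *; lra) L2 ltac:(unfold in01 in *; lra)).
  unfold in01 in *. apply Rle_ge.
  destruct (Rle_dec (1 - u P2 Q1) (1 - u P1 Q2)).
  - apply hA; lra.
  - rewrite (Hc (1 - u P2 Q1)) by (unfold in01; lra). apply hA; lra.
Qed.

Lemma part1 u : is_uninorm u -> propA u -> propB u ->
  rearrangement u (Phi u) /\ dual_rearrangement u (Phi u).
Proof.
  intros U hA hB. pose proof (Phi_uninorm u U) as V.
  pose proof U as [Hcl _]. pose proof V as [Vcl _].
  split.
  - intros n x y sigma Hn [Sx Mx] [Sy My] HP.
    assert (HP' : is_perm (S (n - 1)) sigma) by (replace (S (n - 1)) with n by lia; exact HP).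
    pose proof HP as [Hb _].
    rewrite <- (proj1 (fold_opc (Phi u) (fun i => u (x (n - 1 - i)%nat) (y i)) (n - 1) V ltac:(intros; apply Hcl; [apply Sx|apply Sy]; lia))).
    rewrite <- (proj1 (fold_opc (Phi u) (fun i => u (x (sigma i)) (y i)) (n - 1) V ltac:(intros; apply Hcl; [apply Sx, Hb|apply Sy]; lia))).
    rewrite <- (proj1 (fold_opc (Phi u) (fun i => u (x i) (y i)) (n - 1) V ltac:(intros; apply Hcl; [apply Sx|apply Sy]; lia))).
    apply (generic Rle (opc (Phi u)) u y (n - 1) x sigma); auto.
    + apply GOOD_le; auto.
    + intros i j k l H1 H2 H3 H4. unfold opc.
      rewrite !clamp_id by (apply Hcl; [apply Sx|apply Sy]; lia).
      apply CoreR; auto; try (apply Sx; lia); try (apply Sy; lia).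
      apply Mx; lia. apply My; lia.
  - intros n x y sigma Hn [Sx Mx] [Sy My] HP.
    assert (HP' : is_perm (S (n - 1)) sigma) by (replace (S (n - 1)) with n by lia; exact HP).
    pose proof HP as [Hb _].
    rewrite <- (proj1 (fold_opc u (fun i => Phi u (x (n - 1 - i)%nat) (y i)) (n - 1) U ltac:(intros; apply Vcl; [apply Sx|apply Sy]; lia))).
    rewrite <- (proj1 (fold_opc u (fun i => Phi u (x (sigma i)) (y i)) (n - 1) U ltac:(intros; apply Vcl; [apply Sx, Hb|apply Sy]; lia))).
    rewrite <- (proj1 (fold_opc u (fun i => Phi u (x i) (y i)) (n - 1) U ltac:(intros; apply Vcl; [apply Sx|apply Sy]; lia))).
    apply (generic Rge (opc u) (Phi u) y (n - 1) x sigma); auto.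
    + apply GOOD_ge; auto.
    + intros i j k l H1 H2 H3 H4. unfold opc.
      rewrite !clamp_id by (apply Vcl; [apply Sx|apply Sy]; lia).
      apply CoreD; auto; try (apply Sx; lia); try (apply Sy; lia).
      apply Mx; lia. apply My; lia.
Qed.

Lemma Phi_Phi f : Phi (Phi f) = f.
Proof.
  apply functional_extensionality; intro x; apply functional_extensionality; intro y.
  unfold Phi. replace (1 - (1 - x)) with x by ring. replace (1 - (1 - y)) with y by ring. ring.
Qed.

Lemma propA_Phi v : is_uninorm v -> propA' v -> propA (Phi v).
Proof.
  intros [Hcl [Hc _]] hA x y z w H1 H2 H3 H4 H5 H6. unfold Phi.
  assert (K := hA (1 - w) (1 - z) (1 - y) (1 - x) ltac:(lra) ltac:(lra) ltac:(lra) ltac:(lra) ltac:(lra) ltac:(lra)).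
  rewrite (Hc (1 - w)) in K by (unfold in01; lra).
  rewrite (Hc (1 - z)) in K by (unfold in01; lra). lra.
Qed.

Lemma propB_Phi v : propB' v -> propB (Phi v).
Proof.
  intros hB x y z w H1 H2 H3 H4 H5 H6. unfold Phi.
  assert (K := hB (1 - y) (1 - x) (1 - w) (1 - z) ltac:(lra) ltac:(lra) ltac:(lra) ltac:(lra) ltac:(lra) ltac:(lra)).
  lra.
Qed.

Theorem corollary4 :
  (forall otimes : R -> R -> R,
     is_uninorm otimes -> propA otimes -> propB otimes ->
     rearrangement otimes (Phi otimes) /\ dual_rearrangement otimes (Phi otimes)) /\
  (forall oplus : R -> R -> R,
     is_uninorm oplus -> propA' oplus -> propB' oplus ->
     rearrangement (Phi oplus) oplus /\ dual_rearrangement (Phi oplus) oplus).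
Proof.
  split.
  - apply part1.
  - intros v U hA hB.
    pose proof (part1 (Phi v) (Phi_uninorm v U) (propA_Phi v U hA) (propB_Phi v hB)) as K.
    rewrite Phi_Phi in K. exact K.
Qed.
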